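(* Suppose there exists $\rho$ such that for every metric space $M$ and every $s\in M$ for which $d(s,p)$ is the same for all $p\in M\setminus\{s\}$, the infinite server problem on $(M,s)$ admits a strictly $\rho$-competitive online algorithm. Then for every metric space $M$ and every $s\in M$ the infinite server problem on $(M,s)$ is competitive.
   Context: Infinite server problem on $(M,s)$: $M$ is a metric space with metric $d$ and $s\in M$ the source; an unbounded number of servers initially reside at $s$. A finite sequence of requests (points of $M$) is revealed one by one; each must be served immediately, without knowledge of future requests, by moving some server to it; the cost is the total distance traveled. An online algorithm $ALG$ is strictly $\rho$-competitive if $ALG(\sigma)\le\rho\,OPT(\sigma)$ for all request sequences $\sigma$; the problem is competitive if some online algorithm satisfies $ALG(\sigma)\le\rho'\,OPT(\sigma)+c$ for all $\sigma$, for some constants $\rho',c$. *)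

(* Defs.v *)
From Stdlib Require Import Reals List.
From Coquelicot Require Import Coquelicot.
Import ListNotations.
Open Scope R_scope.

Record is_metric {M : Type} (d : M -> M -> R) : Prop := {
  metric_nonneg : forall x y, 0 <= d x y;
  metric_eq0 : forall x y, d x y = 0 <-> x = y;
  metric_sym : forall x y, d x y = d y x;
  metric_triangle : forall x y z, d x z <= d x y + d y z
}.

Definition uniform_source {M : Type} (d : M -> M -> R) (s : M) : Prop :=
  forall p q : M, p <> s -> q <> s -> d s p = d s q.

Definition config (M : Type) := nat -> M.

Definition upd {M : Type} (c : config M) (i : nat) (x : M) : config M :=
  fun j => if Nat.eqb j i then x else c j.

Fixpoint serve_cost {M : Type} (d : M -> M -> R) (f : nat -> nat)
    (k0 : nat) (c : config M) (sigma : list M) : R :=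
  match sigma with
  | [] => 0
  | r :: rest =>
      d (c (f k0)) r + serve_cost d f (S k0) (upd c (f k0) r) rest
  end.

Definition sched_cost {M : Type} (d : M -> M -> R) (s : M) (f : nat -> nat)
    (sigma : list M) : R :=
  serve_cost d f 0 (fun _ => s) sigma.

Definition OPT {M : Type} (d : M -> M -> R) (s : M) (sigma : list M) : R :=
  real (Glb_Rbar (fun x => exists f : nat -> nat, x = sched_cost d s f sigma)).

(** A deterministic online algorithm: given the past requests and the current
    request, it chooses which server moves to the current request. *)
Definition online_alg (M : Type) := list M -> M -> nat.

Definition alg_sched {M : Type} (s : M) (A : online_alg M) (sigma : list M)
    : nat -> nat :=
  fun k => A (firstn k sigma) (nth k sigma s).

Definition ALG {M : Type} (d : M -> M -> R) (s : M) (A : online_alg M)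
    (sigma : list M) : R :=
  sched_cost d s (alg_sched s A sigma) sigma.

Definition strictly_competitive {M : Type} (d : M -> M -> R) (s : M)
    (A : online_alg M) (rho : R) : Prop :=
  forall sigma : list M, ALG d s A sigma <= rho * OPT d s sigma.

Definition competitive {M : Type} (d : M -> M -> R) (s : M) : Prop :=
  exists (A : online_alg M) (rho c : R),
    forall sigma : list M, ALG d s A sigma <= rho * OPT d s sigma + c.

(* Main.v *)
Require Import Defs.
From Stdlib Require Import Reals List Lia Lra ZArith Cantor ClassicalEpsilon.
From Coquelicot Require Import Coquelicot.
Import ListNotations.
Open Scope R_scope.


Fixpoint sumR (g : Z -> R) (L : list Z) : R :=
  match L with nil => 0 | l :: L' => g l + sumR g L' end.
Fixpoint sumN (g : nat -> R) (N : nat) : R :=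
  match N with O => 0 | S n => sumN g n + g n end.

Lemma sumR_le g h L : (forall l, In l L -> g l <= h l) -> sumR g L <= sumR h L.
Proof. induction L; simpl; intros H. lra. pose proof (H a (or_introl eq_refl)).
  assert (sumR g L <= sumR h L) by (apply IHL; auto). lra. Qed.
Lemma sumR_plus g h L : sumR (fun l => g l + h l) L = sumR g L + sumR h L.
Proof. induction L; simpl. lra. rewrite IHL; lra. Qed.
Lemma sumR_scal a g L : sumR (fun l => a * g l) L = a * sumR g L.
Proof. induction L; simpl. lra. rewrite IHL; lra. Qed.
Lemma sumR_opp g L : sumR (fun l => - g l) L = - sumR g L.
Proof. induction L; simpl. lra. rewrite IHL; lra. Qed.
Lemma sumR_nonneg g L : (forall l, In l L -> 0 <= g l) -> 0 <= sumR g L.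
Proof. induction L; simpl; intros H. lra. pose proof (H a (or_introl eq_refl)).
  assert (0 <= sumR g L) by (apply IHL; auto). lra. Qed.
Lemma sumR_ge_term g L i : In i L -> (forall l, In l L -> 0 <= g l) -> g i <= sumR g L.
Proof. induction L; simpl; intros Hi H. contradiction.
  destruct Hi as [<-|Hi].
  - assert (0 <= sumR g L) by (apply sumR_nonneg; auto). lra.
  - pose proof (H a (or_introl eq_refl)). assert (g i <= sumR g L) by (apply IHL; auto). lra. Qed.
Lemma sumR_zero g L : (forall l, In l L -> g l = 0) -> sumR g L = 0.
Proof. induction L; simpl; intros H. lra. rewrite H, IHL; auto. lra. Qed.
Lemma sumR_ind_eq L z : NoDup L -> sumR (fun l => if Z.eq_dec l z then 1 else 0) L <= 1.
Proof. induction L as [|a L IH]; simpl; intros Hn. lra. inversion Hn; subst.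
  destruct (Z.eq_dec a z).
  - subst. rewrite sumR_zero. lra. intros l Hl. destruct (Z.eq_dec l z); subst; tauto.
  - specialize (IH H2). lra. Qed.
Lemma sumR_ind_filter L (p : Z -> bool) :
  sumR (fun l => if p l then 1 else 0) L = INR (length (filter p L)).
Proof. induction L; simpl. reflexivity. destruct (p a); simpl length; rewrite IHL; [rewrite S_INR|]; lra. Qed.
Lemma sumR_ind_in L W : NoDup L ->
  sumR (fun l => if in_dec Z.eq_dec l W then 1 else 0) L <= INR (length W).
Proof. intros Hn.
  assert (E: sumR (fun l => if in_dec Z.eq_dec l W then 1 else 0) L =
    sumR (fun l => if (if in_dec Z.eq_dec l W then true else false) then 1 else 0) L).
  { apply Rle_antisym; apply sumR_le; intros l _; destruct (in_dec Z.eq_dec l W); lra. }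
  rewrite E, sumR_ind_filter. apply le_INR. apply NoDup_incl_length.
  apply NoDup_filter; auto. intros x Hx. apply filter_In in Hx as [_ Hx].
  destruct (in_dec Z.eq_dec x W); congruence. Qed.

Lemma sumN_upd g g' N j0 : (j0 < N)%nat -> (forall j, j <> j0 -> g' j = g j) ->
  sumN g' N = sumN g N + (g' j0 - g j0).
Proof. induction N; simpl; intros Hj H. lia.
  destruct (Nat.eq_dec N j0).
  - subst. assert (sumN g' j0 = sumN g j0).
    { clear IHN Hj. assert (forall k, (k <= j0)%nat -> sumN g' k = sumN g k).
      induction k; simpl; intros. auto. rewrite IHk by lia. rewrite H by lia. auto. auto. }
    lra.
  - rewrite (IHN ltac:(lia) H). rewrite (H N) by auto. lra. Qed.
Lemma sumN_nonneg g N : (forall j, 0 <= g j) -> 0 <= sumN g N.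
Proof. induction N; simpl; intros H. lra. pose proof (H N). specialize (IHN H). lra. Qed.
Lemma sumN_zero g N : (forall j, g j = 0) -> sumN g N = 0.
Proof. induction N; simpl; intros H. lra. rewrite IHN, H; auto; lra. Qed.
Lemma sumR_scal_r g a L : sumR (fun l => g l * a) L = sumR g L * a.
Proof. induction L; simpl. lra. rewrite IHL; lra. Qed.
Lemma sumR_ext g h L : (forall l, In l L -> g l = h l) -> sumR g L = sumR h L.
Proof. intros H; apply Rle_antisym; apply sumR_le; intros l Hl; rewrite H; auto; lra. Qed.
Lemma sumN_ext g h N : (forall j, g j = h j) -> sumN g N = sumN h N.
Proof. induction N; simpl; intros H; auto. rewrite IHN, H; auto. Qed.

Definition D (l : Z) : R := Rpower 2 (IZR l).
Lemma D_pos l : 0 < D l. Proof. unfold D, Rpower. apply exp_pos. Qed.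
Lemma D_succ l : D (l + 1) = 2 * D l.
Proof. unfold D. rewrite plus_IZR, Rpower_plus, Rpower_1 by lra. lra. Qed.
Lemma D_lt l l' : (l < l')%Z -> D l < D l'.
Proof. intros H. unfold D. apply Rpower_lt. lra. apply IZR_lt; auto. Qed.
Lemma D_le l l' : (l <= l')%Z -> D l <= D l'.
Proof. intros H. destruct (Z.eq_dec l l'). subst; lra. left; apply D_lt; lia. Qed.
Lemma D_lt_inv l l' : D l < D l' -> (l < l')%Z.
Proof. intros H. destruct (Z_lt_le_dec l l'); auto. pose proof (D_le l' l ltac:(lia)). lra. Qed.
Lemma D_le_inv l l' : D l <= D l' -> (l <= l')%Z.
Proof. intros H. destruct (Z_le_gt_dec l l'); auto. pose proof (D_lt l' l ltac:(lia)). lra. Qed.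

Definition lg (u : R) : Z := (up (ln u / ln 2) - 1)%Z.
Lemma lg_spec u : 0 < u -> D (lg u) <= u /\ u < D (lg u + 1).
Proof. intros Hu. unfold lg, D. set (t := ln u / ln 2).
  assert (Hl2 : 0 < ln 2) by (pose proof ln_lt_2; lra).
  assert (Ht : Rpower 2 t = u).
  { unfold Rpower, t. replace (ln u / ln 2 * ln 2) with (ln u) by (field; lra). apply exp_ln; auto. }
  destruct (archimed t) as [A1 A2].
  rewrite minus_IZR. replace (IZR (up t - 1 + 1)) with (IZR (up t)) by (f_equal; lia).
  split.
  - destruct (Req_dec (IZR (up t) - 1) t) as [E|E].
    + rewrite E, Ht; lra.
    + left. rewrite <- Ht. apply Rpower_lt; lra.
  - rewrite <- Ht. apply Rpower_lt; lra. Qed.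

Lemma near_range l u : D l < u -> u < 5 * D l -> (lg u - 2 <= l <= lg u)%Z.
Proof. intros H1 H2. assert (Hu : 0 < u) by (pose proof (D_pos l); lra).
  destruct (lg_spec u Hu) as [A B]. split.
  - assert (D (lg u) < D (l + 3)).
    { replace (l+3)%Z with (l+1+1+1)%Z by lia. rewrite !D_succ.
      pose proof (D_pos l). lra. }
    apply D_lt_inv in H. lia.
  - assert (D l < D (lg u + 1)) by lra. apply D_lt_inv in H. lia. Qed.

Definition kap (l : Z) (u : R) : R := Rmin (Rmax (u - D l) 0) (D l).
Lemma kap_nonneg l u : 0 <= kap l u.
Proof. unfold kap. pose proof (D_pos l). unfold Rmin, Rmax; repeat destruct Rle_dec; lra. Qed.
Lemma kap_le l u : kap l u <= D l.
Proof. unfold kap. pose proof (D_pos l). unfold Rmin, Rmax; repeat destruct Rle_dec; lra. Qed.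
Lemma kap_mono l u v : u <= v -> kap l u <= kap l v.
Proof. intros. unfold kap. pose proof (D_pos l). unfold Rmin, Rmax; repeat destruct Rle_dec; lra. Qed.
Lemma kap_full l u : 2 * D l <= u -> kap l u = D l.
Proof. intros. unfold kap. pose proof (D_pos l). unfold Rmin, Rmax; repeat destruct Rle_dec; lra. Qed.
Lemma kap_zero l u : u <= D l -> kap l u = 0.
Proof. intros. unfold kap. pose proof (D_pos l). unfold Rmin, Rmax; repeat destruct Rle_dec; lra. Qed.
Lemma kap_0 l : kap l 0 = 0.
Proof. apply kap_zero. pose proof (D_pos l); lra. Qed.

Lemma kap_const l l' a b : l' <> l -> D l <= a -> a <= b -> b <= 2 * D l -> kap l' a = kap l' b.
Proof. intros Hne Ha Hab Hb. destruct (Z_lt_le_dec l' l).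
  - pose proof (D_le l' (l-1) ltac:(lia)). pose proof (D_succ (l-1)).
    replace (l-1+1)%Z with l in H0 by lia.
    rewrite !kap_full; auto; lra.
  - pose proof (D_le (l+1) l' ltac:(lia)). rewrite D_succ in H.
    rewrite !kap_zero; auto; lra. Qed.

Lemma kap_lip L u v : NoDup L -> 0 <= u -> u <= v ->
  sumR (fun l => kap l v - kap l u) L <= v - u.
Proof. revert u v. induction L as [|l L IH]; simpl; intros u v Hn Hu Huv. lra.
  inversion Hn; subst.
  set (a := Rmax u (Rmin (D l) v)). set (b := Rmax a (Rmin (2 * D l) v)).
  pose proof (D_pos l) as Dp.
  assert (Hab : u <= a /\ a <= b /\ b <= v) by (unfold b, a, Rmin, Rmax; repeat destruct Rle_dec; lra).
  assert (Hk : kap l v - kap l u = b - a).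
  { unfold kap, b, a, Rmin, Rmax; repeat destruct Rle_dec; lra. }
  assert (Hc : a = b \/ (D l <= a /\ b <= 2 * D l)).
  { unfold b, a, Rmin, Rmax; repeat destruct Rle_dec; lra. }
  assert (E : sumR (fun l0 => kap l0 v - kap l0 u) L =
     sumR (fun l0 => kap l0 v - kap l0 b) L + sumR (fun l0 => kap l0 b - kap l0 a) L
     + sumR (fun l0 => kap l0 a - kap l0 u) L).
  { rewrite <- !sumR_plus. apply Rle_antisym; apply sumR_le; intros; lra. }
  assert (E2 : sumR (fun l0 => kap l0 b - kap l0 a) L = 0).
  { apply sumR_zero. intros l0 Hl0. destruct Hc as [<-|[Ha Hb]]. lra.
    rewrite (kap_const l l0 a b); try lra. intro; subst; contradiction. }
  pose proof (IH b v H2 ltac:(lra) ltac:(lra)).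
  pose proof (IH u a H2 ltac:(lra) ltac:(lra)).
  lra. Qed.

Lemma kap_lip_abs L u v : NoDup L -> 0 <= u -> 0 <= v ->
  sumR (fun l => Rabs (kap l v - kap l u)) L <= Rabs (v - u).
Proof. intros Hn Hu Hv. destruct (Rle_dec u v).
  - rewrite (Rabs_right (v - u)) by lra.
    eapply Rle_trans; [|apply (kap_lip L u v Hn Hu r)]. apply sumR_le; intros.
    pose proof (kap_mono l u v r). rewrite Rabs_right; lra.
  - rewrite (Rabs_left1 (v - u)) by lra.
    replace (- (v - u)) with (u - v) by ring. eapply Rle_trans; [|apply (kap_lip L v u Hn Hv ltac:(lra))]. apply sumR_le; intros.
    pose proof (kap_mono l v u ltac:(lra)). rewrite Rabs_left1; lra. Qed.

Lemma kap_sum_le L u : NoDup L -> 0 <= u -> sumR (fun l => kap l u) L <= u.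
Proof. intros. pose proof (kap_lip L 0 u H ltac:(lra) H0). replace (u - 0) with u in H1 by ring.
  eapply Rle_trans; [|apply H1]. apply sumR_le; intros. rewrite kap_0. lra. Qed.

Section Space.
Variable M : Type.
Variable d : M -> M -> R.
Variable s : M.
Hypothesis Hm : is_metric d.

Lemma dnn x y : 0 <= d x y. Proof. apply (metric_nonneg d Hm). Qed.
Lemma dxx x : d x x = 0. Proof. apply (metric_eq0 d Hm); auto. Qed.
Lemma dsym x y : d x y = d y x. Proof. apply (metric_sym d Hm). Qed.
Lemma dtri x y z : d x z <= d x y + d y z. Proof. apply (metric_triangle d Hm). Qed.

Definition rg (x : M) : Z := (lg (d s x) - 1)%Z.
Definition inring (l : Z) (x : M) : Prop := d s x <> 0 /\ rg x = l.

Lemma inring_bounds l x : inring l x -> 2 * D l <= d s x < 4 * D l.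
Proof. intros [H1 H2]. pose proof (dnn s x).
  destruct (lg_spec (d s x) ltac:(lra)) as [A B]. unfold rg in H2.
  replace (lg (d s x)) with (l + 1)%Z in * by lia.
  replace (l+1+1)%Z with (l+1+1)%Z in B by lia. rewrite !D_succ in A, B. rewrite D_succ in B. lra. Qed.

Definition to_l (l : Z) (x : M) : option M :=
  if Req_dec_T (d s x) 0 then None else if Z.eq_dec (rg x) l then Some x else None.

Lemma to_l_some l x q : to_l l x = Some q -> q = x /\ inring l x.
Proof. unfold to_l. destruct Req_dec_T; try discriminate. destruct Z.eq_dec; try discriminate.
  intros E; inversion E; subst. split; auto. split; auto. Qed.
Lemma to_l_s l : to_l l s = None.
Proof. unfold to_l. rewrite dxx. destruct Req_dec_T; auto. congruence. Qed.
Lemma to_l_rg x : d s x <> 0 -> to_l (rg x) x = Some x.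
Proof. intros H. unfold to_l. destruct Req_dec_T; try contradiction.
  destruct Z.eq_dec; congruence. Qed.
Lemma to_l_zero l x : d s x = 0 -> to_l l x = None.
Proof. intros H. unfold to_l. destruct Req_dec_T; congruence. Qed.

Definition dl (l : Z) (a b : option M) : R :=
  match a, b with
  | None, None => 0
  | Some x, Some y => Rmin (d x y) (D l)
  | _, _ => D l
  end.

Lemma dl_metric l : is_metric (dl l).
Proof. pose proof (D_pos l) as Dp. constructor.
  - intros [x|] [y|]; simpl; try lra. pose proof (dnn x y). unfold Rmin; destruct Rle_dec; lra.
  - intros [x|] [y|]; simpl; split; intros H; try congruence; try lra.
    + f_equal. apply (metric_eq0 d Hm). pose proof (dnn x y). unfold Rmin in H; destruct Rle_dec; lra.
    + inversion H; subst. rewrite dxx. unfold Rmin; destruct Rle_dec; lra.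
  - intros [x|] [y|]; simpl; auto. rewrite dsym; auto.
  - intros [x|] [y|] [z|]; simpl.
    + pose proof (dtri x y z). pose proof (dnn x y); pose proof (dnn y z).
      unfold Rmin; repeat destruct Rle_dec; lra.
    + pose proof (dnn x y). unfold Rmin; repeat destruct Rle_dec; lra.
    + pose proof (dnn x z). unfold Rmin; repeat destruct Rle_dec; lra.
    + lra.
    + pose proof (dnn y z). unfold Rmin; repeat destruct Rle_dec; lra.
    + lra.
    + lra.
    + lra.
Qed.

Lemma dl_uniform l : uniform_source (dl l) None.
Proof. intros [p|] [q|] Hp Hq; simpl; congruence. Qed.

Lemma dl_nonneg l a b : 0 <= dl l a b.
Proof. apply (metric_nonneg _ (dl_metric l)). Qed.

Definition nearI (l : Z) (u : R) : R :=
  if Rlt_dec (D l) u then if Rlt_dec u (5 * D l) then 1 else 0 else 0.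

Lemma nearI_sum L u : NoDup L -> sumR (fun l => nearI l u) L <= 3.
Proof. intros Hn. replace 3 with (INR (length [(lg u - 2)%Z; (lg u - 1)%Z; lg u])) by (simpl; lra).
  eapply Rle_trans.
  2: { apply (sumR_ind_in L [(lg u - 2)%Z; (lg u - 1)%Z; lg u] Hn). }
  apply sumR_le. intros l _. unfold nearI.
  destruct Rlt_dec; [destruct Rlt_dec|]; destruct in_dec; try lra.
  exfalso. apply n. pose proof (near_range l u r r0). simpl.
  destruct (Z.eq_dec l (lg u - 2)); [auto|]. destruct (Z.eq_dec l (lg u - 1)); [auto|].
  right; right; left; lia. Qed.

Lemma psi_near l q x r : inring l q ->
  Rmin (d q r) (D l) - Rmin (d q x) (D l) <= nearI l (d s x) * d x r.
Proof. intros Hq. pose proof (inring_bounds l q Hq). pose proof (D_pos l).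
  pose proof (dtri q x r). pose proof (dnn q r). pose proof (dnn x r). pose proof (dnn q x).
  unfold nearI. destruct Rlt_dec; [destruct Rlt_dec|].
  - unfold Rmin; repeat destruct Rle_dec; lra.
  - pose proof (dtri s q x). assert (D l <= d q x) by lra.
    unfold Rmin; repeat destruct Rle_dec; lra.
  - pose proof (dtri s x q). rewrite (dsym x q) in H5. assert (D l <= d q x) by lra.
    unfold Rmin; repeat destruct Rle_dec; lra. Qed.

Definition T (l : Z) (o : option M) (x : M) : R :=
  match o with None => 0 | Some q => Rmin (d q x) (D l) - kap l (d s x) end.

Lemma contrib l o x r : (forall q, o = Some q -> inring l q) ->
  (match to_l l r with Some _ => dl l o (Some r) | None => 0 end)
  + T l (match to_l l r with Some _ => Some r | None => o end) r - T l o x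
  <= (if Z.eq_dec l (rg r) then 1 else 0) * d x r + nearI l (d s x) * d x r
     + Rabs (kap l (d s r) - kap l (d s x)).
Proof. intros Ho. pose proof (dnn x r) as Hxr.
  assert (Hn : 0 <= nearI l (d s x)) by (unfold nearI; repeat destruct Rlt_dec; lra).
  pose proof (Rabs_pos (kap l (d s r) - kap l (d s x))).
  assert (Hnxr : 0 <= nearI l (d s x) * d x r) by (apply Rmult_le_pos; auto).
  destruct (to_l l r) as [q0|] eqn:E.
  - apply to_l_some in E as [-> Hr]. destruct Hr as [Hr0 Hrl].
    destruct (Z.eq_dec l (rg r)); [|congruence].
    assert (Hk : kap l (d s r) = D l) by (apply kap_full; apply inring_bounds; split; auto).
    simpl T. rewrite dxx, Hk. rewrite Hk in H. pose proof (D_pos l).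
    destruct o as [q|]; simpl.
    + pose proof (kap_le l (d s x)). pose proof (dtri q x r). pose proof (dnn q r).
      pose proof (dnn q x). unfold Rmin; repeat destruct Rle_dec; lra.
    + unfold Rmin; repeat destruct Rle_dec; lra.
  - assert (0 <= (if Z.eq_dec l (rg r) then 1 else 0) * d x r)
      by (apply Rmult_le_pos; auto; destruct Z.eq_dec; lra).
    destruct o as [q|]; simpl; [|lra].
    pose proof (psi_near l q x r (Ho q eq_refl)).
    pose proof (Rle_abs (kap l (d s x) - kap l (d s r))).
    rewrite Rabs_minus_sym in H2. lra. Qed.

Variable L : list Z.
Hypothesis HL : NoDup L.

Definition phi (x : M) (o : Z -> option M) : R := d s x + sumR (fun l => T l (o l) x) L.

Lemma phi_nonneg x o : (forall l q, o l = Some q -> inring l q) -> 0 <= phi x o.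
Proof. intros _. unfold phi. pose proof (kap_sum_le L (d s x) HL (dnn s x)).
  assert (sumR (fun l => - kap l (d s x)) L <= sumR (fun l => T l (o l) x) L).
  { apply sumR_le. intros l _. destruct (o l); simpl. pose proof (D_pos l).
    pose proof (dnn m x). unfold Rmin; destruct Rle_dec; lra. pose proof (kap_nonneg l (d s x)); lra. }
  rewrite sumR_opp in H0. lra. Qed.

Lemma phi_step o x r : (forall l q, o l = Some q -> inring l q) ->
  sumR (fun l => match to_l l r with Some _ => dl l (o l) (Some r) | None => 0 end) L
  + phi r (fun l => match to_l l r with Some _ => Some r | None => o l end) - phi x o
  <= 6 * d x r.
Proof. intros Ho. unfold phi.
  assert (E : forall A B C D' : R, A + (B + C) - (D' + sumR (fun l => T l (o l) x) L)
     = A + C + sumR (fun l => - T l (o l) x) L + (B - D')) by (intros; rewrite sumR_opp; ring).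
  rewrite E; clear E. rewrite <- !sumR_plus.
  eapply Rle_trans with (sumR (fun l => (if Z.eq_dec l (rg r) then 1 else 0) * d x r
     + nearI l (d s x) * d x r + Rabs (kap l (d s r) - kap l (d s x))) L + (d s r - d s x)).
  { apply Rplus_le_compat_r. apply sumR_le. intros l _.
    pose proof (contrib l (o l) x r (Ho l)). lra. }
  rewrite !sumR_plus. rewrite !(sumR_scal_r). 
  pose proof (sumR_ind_eq L (rg r) HL). pose proof (nearI_sum L (d s x) HL).
  pose proof (kap_lip_abs L (d s x) (d s r) HL (dnn s x) (dnn s r)).
  pose proof (dtri s x r). pose proof (dtri s r x). rewrite (dsym r x) in H3.
  pose proof (dnn x r).
  assert (Rabs (d s r - d s x) <= d x r) by (apply Rabs_le; lra).
  nra. Qed.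
End Space.

Section Opt.
Variable M : Type.
Variable d : M -> M -> R.
Variable s : M.
Hypothesis Hm : is_metric d.
Variable L : list Z.
Hypothesis HL : NoDup L.
Variable f : nat -> nat.
Variable fl : Z -> nat -> nat.
Variable N : nat.

Definition Phi (c : config M) (cl : Z -> config (option M)) : R :=
  sumN (fun j => phi M d s L (c j) (fun l => cl l (S j))) N.

Lemma phi_ext x o1 o2 : (forall l, o1 l = o2 l) -> phi M d s L x o1 = phi M d s L x o2.
Proof. intros H. unfold phi. f_equal. apply sumR_ext. intros l _. rewrite H. auto. Qed.

Lemma serve_cost_nonneg {X} (dd : X -> X -> R) (Hd : forall a b, 0 <= dd a b) g k c sg :
  0 <= serve_cost dd g k c sg.
Proof. revert k c. induction sg; simpl; intros. lra. pose proof (Hd (c (g k)) a).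
  pose proof (IHsg (S k) (upd c (g k) a)). lra. Qed.

Lemma opt_ind : forall sg k0 (c : config M) (cl : Z -> config (option M)),
  (forall l, cl l 0%nat = None) -> (forall l j q, cl l (S j) = Some q -> inring M d s l q) ->
  (forall t, (t < length sg)%nat -> (f (k0 + t) < N)%nat) ->
  (forall t, (t < length sg)%nat -> forall l, fl l (k0 + t)%nat =
      match to_l M d s l (nth t sg s) with Some _ => S (f (k0 + t)) | None => 0%nat end) ->
  sumR (fun l => serve_cost (dl M d l) (fl l) k0 (cl l) (map (to_l M d s l) sg)) L
  <= 6 * serve_cost d f k0 c sg + Phi c cl.
Proof.
  induction sg as [|r sg IH]; intros k0 c cl H0 Hin Hf Hfl.
  - simpl. rewrite sumR_zero by auto.
    assert (0 <= Phi c cl). { unfold Phi. apply sumN_nonneg. intros j.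
      apply (phi_nonneg M d s Hm L HL). intros l q Hq. exact (Hin l j q Hq). }
    lra.
  - simpl serve_cost. simpl map.
    simpl (serve_cost _ _ _ _ (_ :: _)).
    rewrite sumR_plus.
    set (j := f k0).
    assert (Hj : (j < N)%nat) by (unfold j; specialize (Hf 0%nat); rewrite Nat.add_0_r in Hf; apply Hf; simpl; lia).
    assert (Hfl0 : forall l, fl l k0 = match to_l M d s l r with Some _ => S j | None => 0%nat end).
    { intros l. specialize (Hfl 0%nat ltac:(simpl; lia) l). rewrite Nat.add_0_r in Hfl. exact Hfl. }
    set (cl' := fun l => upd (cl l) (fl l k0) (to_l M d s l r)).
    set (c' := upd c j r).
    pose proof (IH (S k0) c' cl') as IH'.
    assert (IHr : sumR (fun l => serve_cost (dl M d l) (fl l) (S k0) (cl' l) (map (to_l M d s l) sg)) L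
       <= 6 * serve_cost d f (S k0) c' sg + Phi c' cl').
    { apply IH'.
      - intros l. unfold cl', upd. rewrite Hfl0. destruct (to_l M d s l r); simpl; auto.
      - intros l j' q. unfold cl', upd. rewrite Hfl0.
        destruct (to_l M d s l r) eqn:E; simpl.
        + destruct (Nat.eqb j' j) eqn:E2.
          * intros Hq; inversion Hq; subst. apply to_l_some in E as [Hq1 Hq2]; subst; exact Hq2.
          * apply Hin.
        + apply Hin.
      - intros t Ht. replace (S k0 + t)%nat with (k0 + S t)%nat by lia. apply Hf. simpl; lia.
      - intros t Ht l. replace (S k0 + t)%nat with (k0 + S t)%nat by lia. apply (Hfl (S t)). simpl; lia. }
    unfold cl' in IHr.
    assert (Hst : sumR (fun l => dl M d l (cl l (fl l k0)) (to_l M d s l r)) L =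
      sumR (fun l => match to_l M d s l r with Some _ => dl M d l (cl l (S j)) (Some r) | None => 0 end) L).
    { apply sumR_ext. intros l _. rewrite Hfl0. destruct (to_l M d s l r) eqn:E.
      - apply to_l_some in E as [-> _]. auto.
      - rewrite H0. auto. }
    assert (HPhi : Phi c' cl' = Phi c cl +
       (phi M d s L r (fun l => match to_l M d s l r with Some _ => Some r | None => cl l (S j) end)
        - phi M d s L (c j) (fun l => cl l (S j)))).
    { unfold Phi. erewrite sumN_upd with (j0 := j); auto.
      - f_equal. f_equal. unfold c', upd. rewrite Nat.eqb_refl. apply phi_ext.
        intros l. unfold cl', upd. rewrite Hfl0. destruct (to_l M d s l r) eqn:E.
        + rewrite Nat.eqb_refl. apply to_l_some in E as [-> _]. auto.
        + simpl. auto.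
      - intros j' Hj'. unfold c', upd. apply Nat.eqb_neq in Hj'. rewrite Hj'.
        apply phi_ext. intros l. unfold cl', upd. rewrite Hfl0.
        destruct (to_l M d s l r); simpl; auto. rewrite Hj'. auto. }
    pose proof (phi_step M d s Hm L HL (fun l => cl l (S j)) (c j) r
      (fun l q H => Hin l j q H)) as Hstep.
    rewrite Hst. fold c'. fold cl' in IHr. rewrite HPhi in IHr. lra.
Qed.
End Opt.

Section Alg.
Variable M : Type.
Variable d : M -> M -> R.
Variable s : M.
Hypothesis Hm : is_metric d.
Variable L : list Z.
Variable enc : Z -> nat -> nat.
Hypothesis enc_nz : forall l j, enc l j <> 0%nat.
Hypothesis enc_inj : forall l j l' j', enc l j = enc l' j' -> l = l' /\ j = j'.
Variable F : nat -> nat.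
Variable Fl : Z -> nat -> nat.

Lemma alg_bound i x o r : (x = s \/ inring M d s i x) -> (o = None \/ o = Some x) ->
  inring M d s i r -> d x r <= 8 * dl M d i o (Some r).
Proof. intros Hx Ho Hr. pose proof (inring_bounds M d s Hm i r Hr). pose proof (D_pos i).
  assert (d x r < 8 * D i).
  { destruct Hx as [ -> | Hx ]. lra. pose proof (inring_bounds M d s Hm i x Hx).
    pose proof (dtri M d Hm x s r). rewrite (dsym M d Hm x s) in H2. lra. }
  pose proof (dnn M d Hm x r).
  destruct Ho as [ -> | -> ]; simpl. lra. unfold Rmin; destruct Rle_dec; lra. Qed.

Lemma alg_ind : forall sg k0 (c : config M) (cl : Z -> config (option M)),
  c 0%nat = s ->
  (forall l j, (c (enc l j) = s \/ inring M d s l (c (enc l j))) /\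
               (cl l j = None \/ cl l j = Some (c (enc l j)))) ->
  (forall t, (t < length sg)%nat ->
     (d s (nth t sg s) = 0 -> F (k0 + t) = 0%nat) /\
     (d s (nth t sg s) <> 0 -> F (k0 + t) = enc (rg M d s (nth t sg s)) (Fl (rg M d s (nth t sg s)) (k0 + t))
        /\ In (rg M d s (nth t sg s)) L)) ->
  serve_cost d F k0 c sg <= 8 * sumR (fun l => serve_cost (dl M d l) (Fl l) k0 (cl l) (map (to_l M d s l) sg)) L.
Proof.
  induction sg as [|r sg IH]; intros k0 c cl Hc0 Hinv HF.
  - simpl. rewrite sumR_zero by auto. lra.
  - simpl serve_cost. simpl map. simpl (serve_cost _ _ _ _ (_ :: _)). rewrite sumR_plus.
    assert (HF0 := HF 0%nat ltac:(simpl; lia)). rewrite Nat.add_0_r in HF0. simpl nth in HF0.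
    set (cl' := fun l => upd (cl l) (Fl l k0) (to_l M d s l r)).
    set (c' := upd c (F k0) r).
    assert (IHr : serve_cost d F (S k0) c' sg <= 8 * sumR (fun l => serve_cost (dl M d l) (Fl l) (S k0) (cl' l) (map (to_l M d s l) sg)) L).
    { apply IH.
      - unfold c', upd. destruct (Nat.eqb 0 (F k0)) eqn:E; auto.
        apply Nat.eqb_eq in E. destruct (Req_dec_T (d s r) 0) as [Z|Z].
        + apply (metric_eq0 d Hm) in Z. auto.
        + destruct (proj2 HF0 Z) as [E2 _]. rewrite E2 in E. symmetry in E. exfalso; eapply enc_nz; eauto.
      - intros l j. unfold c', cl', upd.
        destruct (Req_dec_T (d s r) 0) as [Z|Z].
        + assert (E1 : Nat.eqb (enc l j) (F k0) = false).
          { rewrite (proj1 HF0 Z). apply Nat.eqb_neq. apply enc_nz. }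
          rewrite E1. rewrite (to_l_zero M d s l r Z).
          destruct (Nat.eqb j (Fl l k0)).
          * split; [apply Hinv|]. auto.
          * apply Hinv.
        + destruct (proj2 HF0 Z) as [E2 _]. rewrite E2.
          destruct (Nat.eqb (enc l j) (enc (rg M d s r) (Fl (rg M d s r) k0))) eqn:E.
          * apply Nat.eqb_eq in E. apply enc_inj in E as [-> ->].
            rewrite Nat.eqb_refl. rewrite to_l_rg by auto. split; right; auto. split; auto.
          * destruct (Nat.eqb j (Fl l k0)) eqn:E3; [|apply Hinv].
            split; [apply Hinv|].
            destruct (Z.eq_dec l (rg M d s r)).
            { subst l. apply Nat.eqb_eq in E3. subst j. rewrite Nat.eqb_refl in E. discriminate. }
            left. unfold to_l. destruct Req_dec_T; auto. destruct Z.eq_dec; auto. congruence.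
      - intros t Ht. replace (S k0 + t)%nat with (k0 + S t)%nat by lia. apply (HF (S t)). simpl; lia. }
    assert (Hrest : 0 <= sumR (fun l => dl M d l (cl l (Fl l k0)) (to_l M d s l r)) L).
    { apply sumR_nonneg. intros; apply dl_nonneg; auto. }
    unfold cl' in IHr. fold c'.
    destruct (Req_dec_T (d s r) 0) as [Z|Z].
    + rewrite (proj1 HF0 Z), Hc0. rewrite Z. lra.
    + destruct (proj2 HF0 Z) as [E2 Hin]. rewrite E2.
      set (i := rg M d s r). set (j := Fl i k0).
      assert (Hb : d (c (enc i j)) r <= 8 * dl M d i (cl i (Fl i k0)) (to_l M d s i r)).
      { unfold i; rewrite to_l_rg by auto; fold i. destruct (Hinv i j) as [A B]. apply alg_bound; auto.
        split; auto. }
      assert (dl M d i (cl i (Fl i k0)) (to_l M d s i r) <=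
              sumR (fun l => dl M d l (cl l (Fl l k0)) (to_l M d s l r)) L).
      { apply (sumR_ge_term (fun l => dl M d l (cl l (Fl l k0)) (to_l M d s l r)) L i Hin).
        intros; apply dl_nonneg; auto. }
      lra.
Qed.
End Alg.

Lemma glb_facts (E : R -> Prop) x0 : E x0 -> (forall x, E x -> 0 <= x) ->
  0 <= real (Glb_Rbar E) /\ (forall x, E x -> real (Glb_Rbar E) <= x) /\
  (forall y, (forall x, E x -> y <= x) -> y <= real (Glb_Rbar E)).
Proof. intros H0 Hnn. destruct (Glb_Rbar_correct E) as [Hlb Hglb].
  destruct (Glb_Rbar E) as [g| |] eqn:Eg.
  - simpl. split; [|split].
    + apply (Hglb (Finite 0)). intros x Hx. simpl. auto.
    + intros x Hx. apply (Hlb x Hx).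
    + intros y Hy. apply (Hglb (Finite y)). intros x Hx. simpl. auto.
  - exfalso. apply (Hlb x0 H0).
  - exfalso. apply (Hglb (Finite 0)). intros x Hx. simpl. auto. Qed.

Lemma fold_max_ge (l : list nat) x : In x l -> (x <= fold_right max 0 l)%nat.
Proof. induction l; simpl; intros H. contradiction. destruct H as [<-|H]. lia.
  specialize (IHl H). lia. Qed.

Definition zc (l : Z) : nat := Cantor.to_nat (Z.to_nat l, Z.to_nat (- l)).
Definition enc (l : Z) (j : nat) : nat := S (Cantor.to_nat (zc l, j)).
Lemma enc_nz l j : enc l j <> 0%nat. Proof. unfold enc; lia. Qed.
Lemma enc_inj l j l' j' : enc l j = enc l' j' -> l = l' /\ j = j'.
Proof. unfold enc. intros H. apply Nat.succ_inj in H.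
  pose proof (f_equal Cantor.of_nat H) as H0. rewrite !Cantor.cancel_of_to in H0.
  assert (Hz : zc l = zc l') by congruence. assert (j = j') by congruence.
  unfold zc in Hz. pose proof (f_equal Cantor.of_nat Hz) as H5. rewrite !Cantor.cancel_of_to in H5.
  assert (Z.to_nat l = Z.to_nat l') by congruence. assert (Z.to_nat (-l) = Z.to_nat (-l')) by congruence.
  split; auto. lia. Qed.

Theorem corollary3 :
  (exists rho : R,
     forall (M : Type) (d : M -> M -> R) (s : M),
       is_metric d -> uniform_source d s ->
       exists A : online_alg M, strictly_competitive d s A rho) ->
  forall (M : Type) (d : M -> M -> R) (s : M),
    is_metric d -> competitive d s.
Proof.
  intros [rho Hrho] M d s Hm.
  set (HA := fun l => Hrho (option M) (dl M d l) None (dl_metric M d Hm l) (dl_uniform M d l)).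
  set (Al := fun l => proj1_sig (constructive_indefinite_description _ (HA l))).
  assert (HAl : forall l, strictly_competitive (dl M d l) None (Al l) rho).
  { intros l. unfold Al. apply (proj2_sig (constructive_indefinite_description _ (HA l))). }
  set (A := fun (hist : list M) (r : M) =>
    if Req_dec_T (d s r) 0 then 0%nat
    else enc (rg M d s r) (Al (rg M d s r) (map (to_l M d s (rg M d s r)) hist) (Some r))).
  exists A, (48 * Rmax rho 0), 0.
  intros sg.
  set (L := nodup Z.eq_dec (map (rg M d s) sg)).
  assert (HL : NoDup L) by apply NoDup_nodup.
  set (OPTl := fun l => OPT (dl M d l) None (map (to_l M d s l) sg)).
  set (Eset := fun l => fun x => exists f : nat -> nat, x = sched_cost (dl M d l) None f (map (to_l M d s l) sg)).
  assert (Hgl : forall l, 0 <= OPTl l /\ (forall x, Eset l x -> OPTl l <= x)).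
  { intros l. destruct (glb_facts (Eset l) (sched_cost (dl M d l) None (fun _ => 0%nat) (map (to_l M d s l) sg)))
      as [G1 [G2 _]].
    - exists (fun _ => 0%nat); auto.
    - intros x [f ->]. apply serve_cost_nonneg. apply dl_nonneg; auto.
    - split; auto. }
  assert (Halg : ALG d s A sg <= 8 * sumR (fun l => ALG (dl M d l) None (Al l) (map (to_l M d s l) sg)) L).
  { unfold ALG, sched_cost.
    apply (alg_ind M d s Hm L enc enc_nz enc_inj (alg_sched s A sg)
             (fun l => alg_sched None (Al l) (map (to_l M d s l) sg)) sg 0%nat (fun _ => s) (fun _ _ => None)).
    - auto.
    - intros l j. split; auto.
    - intros t Ht. simpl. unfold alg_sched, A. split.
      + intros Z. destruct Req_dec_T; congruence.
      + intros Z. destruct Req_dec_T; try congruence. split.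
        * f_equal. rewrite firstn_map. f_equal.
          rewrite <- (to_l_s M d s Hm (rg M d s (nth t sg s))). rewrite map_nth.
          rewrite to_l_rg; auto.
        * unfold L. apply nodup_In. apply in_map. apply nth_In; auto. }
  assert (Hopt : sumR OPTl L <= 6 * OPT d s sg).
  { set (E := fun x => exists f : nat -> nat, x = sched_cost d s f sg).
    destruct (glb_facts E (sched_cost d s (fun _ => 0%nat) sg)) as [_ [_ G3]].
    - exists (fun _ => 0%nat); auto.
    - intros x [f ->]. apply serve_cost_nonneg. apply (dnn M d Hm).
    - assert (sumR OPTl L / 6 <= OPT d s sg).
      { apply G3. intros x [f ->].
        set (N := S (fold_right max 0%nat (map f (seq 0 (length sg))))).
        set (fl := fun l k => match to_l M d s l (nth k sg s) with Some _ => S (f k) | None => 0%nat end).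
        pose proof (opt_ind M d s Hm L HL f fl N sg 0%nat (fun _ => s) (fun _ _ => None)) as Ho.
        assert (HP : Phi M d s L N (fun _ => s) (fun _ _ => None) = 0).
        { unfold Phi. apply sumN_zero. intros j. unfold phi. rewrite dxx by auto.
          rewrite sumR_zero; auto; lra. }
        rewrite HP in Ho.
        assert (Hs : sumR OPTl L <= sumR (fun l => serve_cost (dl M d l) (fl l) 0 (fun _ => None) (map (to_l M d s l) sg)) L).
        { apply sumR_le. intros l _. apply (proj2 (Hgl l)). exists (fl l). reflexivity. }
        assert (sumR (fun l => serve_cost (dl M d l) (fl l) 0 (fun _ => None) (map (to_l M d s l) sg)) L
                <= 6 * serve_cost d f 0 (fun _ => s) sg + 0).
        { apply Ho; auto.
          - intros l j q H; discriminate.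
          - intros t Ht. simpl. unfold N. apply Nat.lt_succ_r. apply fold_max_ge.
            apply in_map. apply in_seq. lia. }
        unfold sched_cost. lra. }
      lra. }
  assert (Hsum : sumR (fun l => ALG (dl M d l) None (Al l) (map (to_l M d s l) sg)) L
                 <= Rmax rho 0 * sumR OPTl L).
  { rewrite <- sumR_scal. apply sumR_le. intros l _.
    eapply Rle_trans. apply (HAl l). fold (OPTl l). destruct (Hgl l) as [G _].
    pose proof (Rmax_l rho 0). apply Rmult_le_compat_r; auto. }
  assert (0 <= Rmax rho 0) by apply Rmax_r.
  assert (Rmax rho 0 * sumR OPTl L <= Rmax rho 0 * (6 * OPT d s sg)) by (apply Rmult_le_compat_l; auto).
  lra.
Qed.
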